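(* Let $G$ be a connected graph with vertex set $\{u_1,\dots,u_n\}$, $n\ge2$, let $U_1,\dots,U_k$ be the non-singleton true twin equivalence classes of $G$, and let $\mathcal{H}=\{H_1,\dots,H_n\}$ be a family of graphs. Then $$\operatorname{adim}_l(G\circ\mathcal{H})=\sum_{i=1}^n\operatorname{adim}_l(H_i)+\sum_{j:\,I\cap U_j\ne\emptyset}(|I\cap U_j|-1)+\varrho'(G,\mathcal{H}).$$
   Context: All graphs are finite and simple with at least one vertex. $d_G$ is shortest-path distance ($+\infty$ between components), $d_{G,2}(x,y)=\min\{d_G(x,y),2\}$; $s$ distinguishes $x,y$ w.r.t. $d$ if $d(s,x)\ne d(s,y)$. $\operatorname{adim}_l(H)$ is the minimum size of $S\subseteq V(H)$ such that any two adjacent vertices of $H$ are distinguished w.r.t. $d_{H,2}$ by some vertex of $S$; minimum such sets are local adjacency bases. $\Phi$: class of edgeless graphs. $\mathcal{G}$: class of graphs $H$ such that every local adjacency basis $B$ of $H$ satisfies $B\subseteq N_H(v)$ for some $v\in V(H)$. True twins: $N[x]=N[y]$. Lexicographic product $G\circ\mathcal{H}$: vertex set $\bigcup_i\{u_i\}\times V(H_i)$, $(u_i,v)\sim(u_j,w)$ iff $u_iu_j\in E(G)$, or $i=j$ and $vw\in E(H_i)$. Notation: $T(G)=\bigcup_j U_j$; $V_E=\{u_i\in V(G)-T(G): H_i\in\Phi\}$; $I=\{u_i: H_i\in\mathcal{G}\}$; for each $j$ with $I\cap U_j\ne\emptyset$ choose (arbitrarily) one vertex of $I\cap U_j$ and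 let $I'_j$ be the remaining vertices of $I\cap U_j$ ($I'_j=\emptyset$ otherwise); $X_E=I-\bigcup_jI'_j$. Two vertices $u_i,u_j\in X_E$ satisfy $\mathcal{R}'$ iff $u_i\sim u_j$ and $d_{G,2}(u,u_i)=d_{G,2}(u,u_j)$ for all $u\in V(G)-(V_E\cup\{u_i,u_j\})$. $\varrho'(G,\mathcal{H})$ is the minimum $|A|$ over $A\subseteq X_E$ such that every pair $u_i,u_j\in X_E$ satisfying $\mathcal{R}'$ is distinguished by some vertex of $A$ (w.r.t. $d_{G,2}$). *)

(* Defs.v *)
From mathcomp Require Import all_boot.
Set Implicit Arguments. Unset Strict Implicit. Unset Printing Implicit Defensive.

Definition simple_graph (T : finType) (e : rel T) : Prop :=
  symmetric e /\ irreflexive e.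

Definition connected_graph (T : finType) (e : rel T) : Prop :=
  forall x y : T, connect e x y.

Definition walk_len (T : finType) (e : rel T) (x y : T) (k : nat) : bool :=
  [exists p : k.-tuple T, path e x p && (last x p == y)].

(* d_{G,2}(x,y) = min(d_G(x,y), 2), where d_G is the length of a shortest
   walk (= +oo if none); i.e. 0 if d=0, 1 if d=1, and 2 otherwise. *)
Definition dist2 (T : finType) (e : rel T) (x y : T) : nat :=
  if walk_len e x y 0 then 0 else if walk_len e x y 1 then 1 else 2.

Definition ladj_gen (T : finType) (e : rel T) (S : {set T}) : bool :=
  [forall x, forall y, e x y ==>
     [exists s in S, dist2 e s x != dist2 e s y]].

Definition adim_l (T : finType) (e : rel T) : nat :=
  \big[minn/#|T|]_(S : {set T} | ladj_gen e S) #|S|.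

Definition ladj_basis (T : finType) (e : rel T) (B : {set T}) : bool :=
  ladj_gen e B && (#|B| == adim_l e).

Definition edgeless (T : finType) (e : rel T) : bool :=
  [forall x, forall y, ~~ e x y].

Definition in_classG (T : finType) (e : rel T) : bool :=
  [forall B : {set T}, ladj_basis e B ==>
    [exists v : T, B \subset [set u | e v u]]].

Definition cnbhd (T : finType) (e : rel T) (x : T) : {set T} :=
  [set y | (y == x) || e x y].

Definition twin_class (T : finType) (e : rel T) (x : T) : {set T} :=
  [set y | cnbhd e y == cnbhd e x].

Definition twin_classes (T : finType) (e : rel T) : {set {set T}} :=
  [set twin_class e x | x in [set x | 1 < #|twin_class e x|]].

Definition TG (T : finType) (e : rel T) : {set T} := cover (twin_classes e).

Section Lex.
Variables (n : nat) (e : rel 'I_n) (V : 'I_n -> finType)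
          (E : forall i, rel (V i)).

Definition lex_adj : rel {i : 'I_n & V i} :=
  fun x y => e (tag x) (tag y) || ((tag x == tag y) && @E (tag x) (tagged x) (tagged_as x y)).

Definition Iset : {set 'I_n} := [set i | in_classG (@E i) ].

Definition VE : {set 'I_n} := [set i | (i \notin TG e) && edgeless (@E i) ].

(* X_E = I - U_j I'_j, for the choice rep(U_j) of a vertex of I cap U_j *)
Definition XE (rep : {set 'I_n} -> 'I_n) : {set 'I_n} :=
  Iset :\: \bigcup_(C in twin_classes e) ((Iset :&: C) :\ rep C).

Definition relR' (rep : {set 'I_n} -> 'I_n) (i j : 'I_n) : bool :=
  [&& i \in XE rep, j \in XE rep, e i j &
   [forall u, (u \notin VE :|: [set i; j]) ==> (dist2 e u i == dist2 e u j)]].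

Definition rho_ok (rep : {set 'I_n} -> 'I_n) (A : {set 'I_n}) : bool :=
  (A \subset XE rep) &&
  [forall i, forall j, relR' rep i j ==>
     [exists s in A, dist2 e s i != dist2 e s j]].

Definition rho' (rep : {set 'I_n} -> 'I_n) : nat :=
  \big[minn/#|XE rep|]_(A : {set 'I_n} | rho_ok rep A) #|A|.

Definition rep_ok (rep : {set 'I_n} -> 'I_n) : Prop :=
  forall C, C \in twin_classes e -> Iset :&: C != set0 -> rep C \in Iset :&: C.

End Lex.

(* Main.v *)
Require Import Defs.
From mathcomp Require Import all_boot zify.
Set Implicit Arguments. Unset Strict Implicit. Unset Printing Implicit Defensive.

Section Gen.
Variables (T : finType) (e : rel T).

Lemma dist2E x y : dist2 e x y = if x == y then 0 else if e x y then 1 else 2.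
Proof.
rewrite /dist2 /walk_len.
have -> : [exists p : 0.-tuple T, path e x p && (last x p == y)] = (x == y).
  apply/existsP/idP => [[p]|/eqP<-].
  - by rewrite tuple0 /=.
  - by exists [tuple]; rewrite /= eqxx.
have -> : [exists p : 1.-tuple T, path e x p && (last x p == y)] = e x y.
  apply/existsP/idP => [[p]|exy].
  - case/tupleP: p => z p; rewrite tuple0 /= andbT => /andP[exz /eqP<-] //.
  - by exists [tuple y]; rewrite /= exy eqxx.
by [].
Qed.

Definition good (A : {set T}) := [forall v, ~~ (A \subset [set u | e v u])].

Lemma lag_sup (A B : {set T}) : ladj_gen e A -> A \subset B -> ladj_gen e B.
Proof.
move=> /forallP hA sAB; apply/forallP => x; apply/forallP => y; apply/implyP => exy.
have /existsP[s /andP[sA hs]] := implyP (forallP (hA x) y) exy.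
by apply/existsP; exists s; rewrite (subsetP sAB) .
Qed.

Lemma bigmin_le (P : pred {set T}) (f : {set T} -> nat) d x :
  P x -> \big[minn/d]_(y | P y) f y <= f x.
Proof.
move=> Px; have : x \in index_enum {set T} by rewrite mem_index_enum.
elim: (index_enum _) => // a r IH; rewrite inE big_cons => /predU1P[<-|xr].
  by rewrite Px geq_minl.
by case: ifP => _; [rewrite geq_min IH ?orbT | exact: IH].
Qed.

Lemma bigmin_att (P : pred {set T}) (f : {set T} -> nat) d x0 :
  P x0 -> f x0 = d -> exists2 x, P x & \big[minn/d]_(y | P y) f y = f x.
Proof.
move=> Px0 fx0.
have : (\big[minn/d]_(y | P y) f y = d) \/ exists2 x, P x & \big[minn/d]_(y | P y) f y = f x.
  elim/big_rec: _ => [|y m Py [->|[x Px ->]]]; first by left.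
  - case: (leqP (f y) d) => h; right; [exists y => //; exact/minn_idPl|].
    by exists x0 => //; rewrite fx0; apply/minn_idPr; apply: ltnW.
  - case: (leqP (f y) (f x)) => h; right; [exists y => //; exact/minn_idPl|].
    by exists x => //; apply/minn_idPr; apply: ltnW.
case=> // h; exists x0 => //; apply/eqP; by rewrite eqn_leq bigmin_le //= h fx0 leqnn.

Qed.

Hypothesis esym : symmetric e.
Hypothesis eirr : irreflexive e.

Lemma lag_setT : ladj_gen e setT.
Proof.
apply/forallP => x; apply/forallP => y; apply/implyP => exy.
have xy : x != y by apply: contraTneq exy => ->; rewrite eirr.
by apply/existsP; exists x; rewrite inE !dist2E eqxx (negbTE xy) exy.
Qed.

Lemma lag_card A : ladj_gen e A -> adim_l e <= #|A|.
Proof. by move=> h; rewrite /adim_l bigmin_le. Qed.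

Lemma basis_ex : exists2 B, ladj_gen e B & #|B| = adim_l e.
Proof.
rewrite /adim_l.
have [B hB ->] := @bigmin_att (ladj_gen e) (fun S => #|S|) #|T| setT lag_setT (cardsT _).
by exists B.
Qed.

Lemma lag_nonempty A x y : e x y -> ladj_gen e A -> A != set0.
Proof.
move=> exy /forallP /(_ x) /forallP /(_ y) /implyP /(_ exy) /existsP [s /andP[sA _]].
by apply/set0Pn; exists s.
Qed.

Lemma adim_lt (x0 : T) : adim_l e < #|T|.
Proof.
have : ladj_gen e [set~ x0].
  apply/forallP => x; apply/forallP => y; apply/implyP => exy.
  have xy : x != y by apply: contraTneq exy => ->; rewrite eirr.
  case: (eqVneq x x0) => [ex|nx].
    have yx : y != x by rewrite eq_sym.
    apply/existsP; exists y; rewrite !inE -ex yx /= !dist2E eqxx.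
    by rewrite (negbTE yx) esym exy.
  apply/existsP; exists x; rewrite !inE nx !dist2E eqxx (negbTE xy) exy.
  by [].
move/lag_card; rewrite cardsC1 => h; apply: (leq_ltn_trans h).
by rewrite prednK // (cardD1 x0).
Qed.

Lemma good_nonempty (x0 : T) A : good A -> A != set0.
Proof.
move/forallP/(_ x0); apply: contra => /eqP ->; exact: sub0set.
Qed.

Lemma good_sup (A B : {set T}) : good A -> A \subset B -> good B.
Proof.
move=> /forallP hA sAB; apply/forallP => v; apply: contra (hA v).
exact: subset_trans.
Qed.

Lemma E1 : exists B, [/\ ladj_gen e B, #|B| = adim_l e & (~~ in_classG e -> good B)].
Proof.
case: (boolP (in_classG e)) => hG.
  by have [B hB cB] := basis_ex; exists B.
move: hG; rewrite negb_forall => /existsP[B]; rewrite negb_imply => /andP[/andP[hB /eqP cB] hn].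
exists B; split => // _; apply/forallP => v; apply: contra hn => h.
by apply/existsP; exists v.
Qed.

Lemma E2 (x0 : T) : exists B, [/\ ladj_gen e B, #|B| = (adim_l e).+1 & good B].
Proof.
have [B hB cB] := basis_ex.
case: (boolP (good B)) => gB.
  have [x xB] : exists x, x \notin B.
    apply/existsP; rewrite -negb_forall; apply/negP => /forallP hall.
    have : B = setT by apply/setP => x; rewrite inE hall.
    by move=> eB; have := adim_lt x0; rewrite -cB eB cardsT ltnn.
  exists (x |: B); split.
  - by apply: lag_sup hB _; exact: subsetUr.
  - by rewrite cardsU1 xB cB.
  - by apply: good_sup gB _; exact: subsetUr.
move: gB; rewrite negb_forall => /existsP[v]; rewrite negbK => sBv.
have vB : v \notin B by apply/negP => /(subsetP sBv); rewrite inE eirr.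
exists (v |: B); split.
- by apply: lag_sup hB _; exact: subsetUr.
- by rewrite cardsU1 vB cB.
apply/forallP => w; apply/negP => sX.
have ewv : e w v by have := subsetP sX v (setU11 v B); rewrite inE.
have /existsP[s /andP[sB hs]] := implyP (forallP (forallP hB w) v) ewv.
have esv : e v s by have := subsetP sBv s sB; rewrite inE.
have esw : e w s by have := subsetP sX s (setU1r v sB); rewrite inE.
move: hs; rewrite !dist2E.
have -> : (s == w) = false by apply/negP => /eqP esw'; rewrite esw' eirr in esw.
have -> : (s == v) = false by apply/negP => /eqP esv'; rewrite esv' eirr in esv.
by rewrite esym esw esym esv.
Qed.

Lemma good_lower A : ladj_gen e A -> in_classG e -> good A -> (adim_l e).+1 <= #|A|.
Proof.
move=> hA hG gA; rewrite ltn_neqAle lag_card // andbT.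
apply/negP => /eqP cA.
have := implyP (forallP hG A); rewrite /ladj_basis hA cA eqxx => /(_ isT) /existsP[v sv].
by move: (forallP gA v); rewrite sv.
Qed.

Lemma edgeless_classG (x0 : T) : edgeless e -> in_classG e.
Proof.
move=> /forallP hE; apply/forallP => B; apply/implyP => /andP[_ /eqP cB].
have : adim_l e <= #|(set0 : {set T})|.
  apply: lag_card; apply/forallP => x; apply/forallP => y.
  by rewrite (negbTE (forallP (hE x) y)).
rewrite cards0 leqn0 -cB cards_eq0 => /eqP ->.
by apply/existsP; exists x0; exact: sub0set.
Qed.

Lemma edgeless_good A : edgeless e -> A != set0 -> good A.
Proof.
move=> /forallP hE /set0Pn[x xA]; apply/forallP => v; apply/negP => /subsetP /(_ x xA).
by rewrite inE (negbTE (forallP (hE v) x)).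
Qed.

End Gen.

Section Twin.
Variables (T : finType) (e : rel T).
Hypothesis esym : symmetric e.
Hypothesis eirr : irreflexive e.
Local Notation tw := (twin_class e).

Lemma cnbhdE x y : (y \in cnbhd e x) = (y == x) || e x y.
Proof. by rewrite inE. Qed.

Lemma twP x y : (y \in tw x) = (cnbhd e y == cnbhd e x).
Proof. by rewrite inE. Qed.

Lemma tw_refl x : x \in tw x.
Proof. by rewrite twP. Qed.

Lemma tw_sym x y : y \in tw x -> x \in tw y.
Proof. by rewrite !twP eq_sym. Qed.

Lemma tw_eq x y : y \in tw x -> tw y = tw x.
Proof.
rewrite twP => /eqP h; apply/setP => z; by rewrite !twP h.
Qed.

Lemma tw_adj x y : y \in tw x -> y != x -> e x y.
Proof.
rewrite twP => /eqP h yx.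
have : y \in cnbhd e y by rewrite cnbhdE eqxx.
by rewrite h cnbhdE (negbTE yx).
Qed.

Lemma tw_d2 x y k : y \in tw x -> k != x -> k != y -> dist2 e k x = dist2 e k y.
Proof.
rewrite twP => /eqP h kx ky; rewrite !dist2E (negbTE kx) (negbTE ky).
have -> : e k x = (k \in cnbhd e x) by rewrite cnbhdE (negbTE kx) esym.
have -> : e k y = (k \in cnbhd e y) by rewrite cnbhdE (negbTE ky) esym.
by rewrite h.
Qed.

Lemma tw_adj2 i j x y : x \in tw i -> y \in tw j -> e i j -> x != y -> e x y.
Proof.
move=> xi yj eij xy.
have : j \in cnbhd e i by rewrite cnbhdE eij orbT.
move: (xi); rewrite twP => /eqP <-; rewrite cnbhdE => /orP[/eqP jx|exj].
  subst j; rewrite eq_sym in xy; exact: tw_adj.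
have : x \in cnbhd e j by rewrite cnbhdE esym exj orbT.
move: yj; rewrite twP => /eqP <-; rewrite cnbhdE (negbTE xy) /= esym; exact.
Qed.

Lemma tw_d2_adj i j y : e i j -> y \in tw j -> i != y -> dist2 e i y = 1.
Proof.
move=> eij yj iy.
have ij : i != j by apply: contraTneq eij => ->; rewrite eirr.
by rewrite -(tw_d2 yj ij iy) dist2E (negbTE ij) eij.
Qed.

Lemma TC_eq C x : C \in twin_classes e -> x \in C -> C = tw x.
Proof.
by case/imsetP => z _ -> xz; rewrite (tw_eq xz).
Qed.

Lemma TC_big C : C \in twin_classes e -> 1 < #|C|.
Proof. by case/imsetP => z; rewrite inE => h ->. Qed.

Lemma TG_TC x : x \in TG e -> tw x \in twin_classes e.
Proof.
case/bigcupP => C hC xC; by rewrite -(TC_eq hC xC).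
Qed.

Lemma TC_TG x : tw x \in twin_classes e -> x \in TG e.
Proof. move=> h; apply/bigcupP; exists (tw x) => //; exact: tw_refl. Qed.

Lemma TC_other C x : C \in twin_classes e -> x \in C -> exists2 y, y \in C & y != x.
Proof.
move=> hC xC; have /card_gt1P[a [b [aC bC ab]]] := TC_big hC.
case: (eqVneq a x) => [ax|ax]; last by exists a.
by exists b => //; rewrite -ax eq_sym.
Qed.

End Twin.

Section Lex2.
Variables (n : nat) (e : rel 'I_n) (V : 'I_n -> finType) (E : forall i, rel (V i)).
Hypothesis esym : symmetric e.
Hypothesis eirr : irreflexive e.
Hypothesis Esym : forall i, symmetric (@E i).
Hypothesis Eirr : forall i, irreflexive (@E i).
Local Notation eP := (lex_adj e E).
Local Notation TT := {i : 'I_n & V i}.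

Definition sigS (F : forall i, {set V i}) : {set TT} := [set p | tagged p \in F (tag p)].
Definition slice (S : {set TT}) i : {set V i} := [set x | Tagged V x \in S].

Lemma sigS_slice S : sigS (slice S) = S.
Proof. by apply/setP => -[i v]; rewrite !inE. Qed.

Lemma card_sigS F : #|sigS F| = \sum_i #|F i|.
Proof.
rewrite -sum1_card.
transitivity (\sum_(i : 'I_n) \sum_(j : V i | j \in F i) 1).
  rewrite (sig_big_dep xpredT (fun i (j : V i) => j \in F i) (fun i j => 1)) /=.
  by apply: eq_bigl => -[i v]; rewrite !inE.
by apply: eq_bigr => i _; rewrite sum1_card.
Qed.

Lemma eP_same i (v w : V i) : eP (Tagged V v) (Tagged V w) = E v w.
Proof. by rewrite /lex_adj /= eirr eqxx /= tagged_asE. Qed.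

Lemma eP_diff i j (v : V i) (w : V j) : i != j -> eP (Tagged V v) (Tagged V w) = e i j.
Proof. by move=> ij; rewrite /lex_adj /= (negbTE ij) orbF. Qed.

Lemma d2P_same i (x v : V i) : dist2 eP (Tagged V x) (Tagged V v) = dist2 (@E i) x v.
Proof. by rewrite !dist2E eq_Tagged /= eP_same. Qed.

Lemma d2P_diff k i (x : V k) (v : V i) : k != i ->
  dist2 eP (Tagged V x) (Tagged V v) = dist2 e k i.
Proof.
move=> ki; rewrite !dist2E eP_diff // (negbTE ki).
have -> : (Tagged V x == Tagged V v) = false.
  by apply/negP => /eqP /(congr1 tag) /= h; rewrite h eqxx in ki.
by [].
Qed.

Definition edge_ok (F : forall i, {set V i}) :=
  forall i j, e i j -> [|| good (@E i) (F i), good (@E j) (F j) |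
     [exists k, [&& k != i, k != j, F k != set0 & dist2 e k i != dist2 e k j]]].

Lemma L1 F : ladj_gen eP (sigS F) ->
  (forall i, ladj_gen (@E i) (F i)) /\ edge_ok F.
Proof.
move=> /forallP hS; split.
  move=> i; apply/forallP => x; apply/forallP => y; apply/implyP => Exy.
  have := implyP (forallP (hS (Tagged V x)) (Tagged V y)); rewrite eP_same => /(_ Exy).
  case/existsP => -[k z]; rewrite inE /= => /andP[zF hs].
  case: (eqVneq k i) => [ki|ki].
    subst k; apply/existsP; exists z; rewrite zF /=.
    by rewrite !d2P_same in hs.
  by rewrite !d2P_diff // eqxx in hs.
move=> i j eij.
have ij : i != j by apply: contraTneq eij => ->; rewrite eirr.
case: (boolP (good (@E i) (F i))) => //= gi.
case: (boolP (good (@E j) (F j))) => //= gj.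
move: gi gj; rewrite !negb_forall => /existsP[v] /negbNE sv /existsP[w] /negbNE sw.
have := implyP (forallP (hS (Tagged V v)) (Tagged V w)); rewrite eP_diff // => /(_ eij).
case/existsP => -[k z]; rewrite inE /= => /andP[zF hs].
case: (eqVneq k i) => [ki|ki].
  subst k; exfalso; move: hs; rewrite d2P_same d2P_diff //.
  have Evz : E v z by have := subsetP sv z zF; rewrite inE.
  have zv : z != v by apply: contraTneq Evz => ->; rewrite Eirr.
  by rewrite !dist2E (negbTE zv) Esym Evz (negbTE ij) eij.
case: (eqVneq k j) => [kj|kj].
  subst k; exfalso; move: hs; rewrite d2P_same d2P_diff //.
  have Evz : E w z by have := subsetP sw z zF; rewrite inE.
  have zv : z != w by apply: contraTneq Evz => ->; rewrite Eirr.
  by rewrite !dist2E (negbTE zv) Esym Evz (negbTE ki) esym eij.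
apply/existsP; exists k; rewrite ki kj /=; apply/andP; split.
  by apply/set0Pn; exists z.
by rewrite !d2P_diff in hs.
Qed.

Lemma L2 F : (forall i, ladj_gen (@E i) (F i)) -> edge_ok F -> ladj_gen eP (sigS F).
Proof.
move=> hF hE.
apply/forallP => -[i v]; apply/forallP => -[j w]; apply/implyP.
rewrite /lex_adj /= => /orP[eij | /andP[/eqP eqij Evw]].
  have ij : i != j by apply: contraTneq eij => ->; rewrite eirr.
  case/or3P: (hE i j eij) => [gi|gj|/existsP[k /and4P[ki kj /set0Pn[z zF] hk]]].
  - have /subsetPn[z zF zn] := forallP gi v.
    apply/existsP; exists (Tagged V z); rewrite inE /= zF /= d2P_same d2P_diff //.
    rewrite inE in zn; rewrite !dist2E (negbTE ij) eij Esym (negbTE zn).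
    by case: (z == v).
  - have /subsetPn[z zF zn] := forallP gj w.
    apply/existsP; exists (Tagged V z); rewrite inE /= zF /= d2P_same d2P_diff 1?eq_sym //.
    have ji : j != i by rewrite eq_sym.
    rewrite inE in zn; rewrite !dist2E (negbTE ji) esym eij Esym (negbTE zn).
    by case: (z == w).
  - apply/existsP; exists (Tagged V z); rewrite inE /= zF /= !d2P_diff //.
subst j; rewrite tagged_asE in Evw.
have /existsP[z /andP[zF hz]] := implyP (forallP (forallP (hF i) v) w) Evw.
by apply/existsP; exists (Tagged V z); rewrite inE /= zF /= !d2P_same.
Qed.

End Lex2.

Lemma card_bigcup_disj (I0 T0 : finType) (P : {pred I0}) (f : I0 -> {set T0}) :
  (forall a b x, a \in P -> b \in P -> x \in f a -> x \in f b -> a = b) ->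
  #|\bigcup_(a in P) f a| = \sum_(a in P) #|f a|.
Proof.
move=> hd.
have -> : \sum_(a in P) #|f a| = \sum_(a in P) \sum_(x : T0) (if x \in f a then 1 else 0).
  by apply: eq_bigr => a _; rewrite -sum1_card big_mkcond.
rewrite -sum1_card big_mkcond /=.
rewrite (exchange_big_dep xpredT) //=; apply: eq_bigr => x _.
case: (boolP (x \in \bigcup_(a in P) f a)) => [/bigcupP[a0 a0P xa0]|nx].
  rewrite (bigD1 a0) /=; last by rewrite a0P.
  rewrite ifT // big1 // => a /andP[/andP[aP _] aa0].
  by case: ifP => // xa; rewrite (hd _ _ _ aP a0P xa xa0) eqxx in aa0.
rewrite big1 // => a /andP[aP _]; case: ifP => // xa.
by case/negP: nx; apply/bigcupP; exists a.
Qed.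

Lemma dist2_sym (T : finType) (e : rel T) : symmetric e -> forall x y, dist2 e x y = dist2 e y x.
Proof. by move=> es x y; rewrite !dist2E eq_sym es. Qed.

Section Comb.
Variables (n : nat) (e : rel 'I_n) (V : 'I_n -> finType) (E : forall i, rel (V i))
  (rep : {set 'I_n} -> 'I_n).
Hypothesis esym : symmetric e.
Hypothesis eirr : irreflexive e.
Hypothesis hrep : rep_ok e E rep.
Local Notation tw := (twin_class e).
Local Notation TC := (twin_classes e).
Local Notation I := (Iset E).
Definition EL : {set 'I_n} := [set i | edgeless (@E i)].
Hypothesis ELI : EL \subset I.

Definition Rset : {set 'I_n} := \bigcup_(C in TC) ((I :&: C) :\ rep C).
Local Notation R := Rset.

Lemma XE_E : XE e E rep = I :\: R.
Proof. by []. Qed.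

Definition adm (Gd : {set 'I_n}) k := (k \notin EL) || (k \in Gd).

Definition Cond (Gd : {set 'I_n}) := forall i j, i \in I -> j \in I -> i \notin Gd -> j \notin Gd ->
  e i j -> exists k, [/\ k != i, k != j, adm Gd k & dist2 e k i != dist2 e k j].

Lemma rep_tw b : tw b \in TC -> b \in I -> rep (tw b) \in I :&: tw b.
Proof.
move=> hC bI; apply: hrep => //; apply/set0Pn; exists b.
by rewrite inE bI tw_refl.
Qed.

Lemma R_char b : b \in R -> [/\ b \in I, tw b \in TC, rep (tw b) \in I :&: tw b & b != rep (tw b)].
Proof.
case/bigcupP => C hC; rewrite in_setD1 in_setI => /andP[brep /andP[bI bC]].
have eC := TC_eq hC bC; subst C.
by split => //; apply: rep_tw.
Qed.

Lemma R_intro b C : C \in TC -> b \in I -> b \in C -> b != rep C -> b \in R.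
Proof.
move=> hC bI bC brep; apply/bigcupP; exists C => //.
by rewrite in_setD1 in_setI brep bI bC.
Qed.

Lemma R_I : R \subset I.
Proof. by apply/subsetP => b /R_char[]. Qed.

Lemma R_TG b : b \in R -> b \in TG e.
Proof. by case/R_char => _ h _ _; apply: TC_TG. Qed.

Lemma XE_I : XE e E rep \subset I.
Proof. by rewrite XE_E subsetDl. Qed.

Lemma XE_twin i j : i \in XE e E rep -> j \in XE e E rep -> j \in tw i -> i = j.
Proof.
rewrite XE_E !in_setD => /andP[iR iI] /andP[jR jI] ji.
case: (eqVneq i j) => // ij.
have hC : tw i \in TC.
  apply/imsetP; exists i => //; rewrite inE; apply/card_gt1P; exists i, j.
  by split => //; apply: tw_refl.
have ri : i = rep (tw i).
  apply/eqP; apply: contraNT iR => h; apply: R_intro hC iI (tw_refl _ _) h.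
have rj : j = rep (tw i).
  apply/eqP; apply: contraNT jR => h; apply: R_intro hC jI ji h.
by rewrite ri -rj.
Qed.

Lemma Cond_uniq Gd b b' : Cond Gd -> b \in I -> b' \in I -> b \notin Gd -> b' \notin Gd ->
  b' \in tw b -> b = b'.
Proof.
move=> hC bI b'I bG b'G bb'.
case: (eqVneq b b') => // nbb'.
have ebb' : e b b' by apply: tw_adj => //; rewrite eq_sym.
have [k [kb kb' _ hk]] := hC _ _ bI b'I bG b'G ebb'.
by rewrite (tw_d2 esym bb' kb kb') eqxx in hk.
Qed.

Lemma R_card : #|R| = \sum_(C in TC | I :&: C != set0) (#|I :&: C| - 1).
Proof.
rewrite /Rset card_bigcup_disj; last first.
  move=> a b x aC bC; rewrite !in_setD1 !in_setI => /andP[_ /andP[_ xa]] /andP[_ /andP[_ xb]].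
  by rewrite (TC_eq aC xa) (TC_eq bC xb).
rewrite (bigID (fun C => I :&: C != set0)) /= [X in _ + X]big1 ?addn0; last first.
  by move=> C /andP[_]; rewrite negbK => /eqP ->; rewrite set0D cards0.
apply: eq_bigr => C /andP[hC ne].
by rewrite (cardsD1 (rep C) (I :&: C)) hrep // add1n subn1.
Qed.

Lemma upper_cond A : rho_ok e E rep A -> Cond (R :|: A).
Proof.
case/andP => AX /forallP hA.
move=> i j iI jI; rewrite !in_setU !negb_or => /andP[iR iA] /andP[jR jA] eij.
have iX : i \in XE e E rep by rewrite XE_E in_setD iR iI.
have jX : j \in XE e E rep by rewrite XE_E in_setD jR jI.
case: (boolP (relR' e E rep i j)) => hR.
  have /existsP[s /andP[sA hs]] := implyP (forallP (hA i) j) hR.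
  exists s; split => //.
  - by apply: contraNneq iA => <-.
  - by apply: contraNneq jA => <-.
  - by rewrite /adm !inE sA !orbT.
move: hR; rewrite /relR' iX jX eij /= negb_forall => /existsP[u].
rewrite negb_imply in_setU in_set2 !negb_or => /andP[/and3P[uVE ui uj] hu].
case: (boolP (adm (R :|: A) u)) => hadm; first by exists u.
move: hadm; rewrite /adm negb_or negbK in_setU negb_or => /andP[uEL /andP[uR _]].
have uI : u \in I by apply: (subsetP ELI).
have uTG : u \in TG e by move: uVE; rewrite /VE inE; move: uEL; rewrite inE => -> ; rewrite andbT negbK.
have hC := TG_TC uTG.
have ur : u = rep (tw u).
  apply/eqP; apply: contraNT uR => h; apply: R_intro hC uI (tw_refl _ _) h.
have [u' u'C u'u] := TC_other hC (tw_refl e u).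
have u'i : u' != i.
  by apply: contraNneq iR => ei; subst u'; apply: R_intro hC iI u'C _; rewrite -ur.
have u'j : u' != j.
  by apply: contraNneq jR => ei; subst u'; apply: R_intro hC jI u'C _; rewrite -ur.
exists u'; split => //.
- rewrite /adm; case: (boolP (u' \in EL)) => //= u'EL.
  rewrite in_setU; apply/orP; left; apply: R_intro hC _ u'C _.
  + exact: (subsetP ELI).
  + by rewrite -ur.
- have iu : i != u by rewrite eq_sym.
  have ju : j != u by rewrite eq_sym.
  have iu' : i != u' by rewrite eq_sym.
  have ju' : j != u' by rewrite eq_sym.
  rewrite (dist2_sym esym u' i) (dist2_sym esym u' j).
  rewrite -(tw_d2 esym u'C iu iu') -(tw_d2 esym u'C ju ju').
  by rewrite (dist2_sym esym i u) (dist2_sym esym j u).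
Qed.


Lemma rho'_le A : rho_ok e E rep A -> rho' e E rep <= #|A|.
Proof. by move=> h; rewrite /rho' bigmin_le. Qed.

Lemma lower_comb (Gd : {set 'I_n}) : Gd \subset I -> Cond Gd -> rho' e E rep + #|R| <= #|Gd|.
Proof.
move=> GI hC.
set Rb := [set rep (tw b) | b in R :\: Gd].
set X := Gd :&: XE e E rep.
set A := X :\: Rb.
have f1 : forall b, b \in R :\: Gd ->
    [/\ b \in I, b \notin Gd, rep (tw b) \in tw b, rep (tw b) != b & rep (tw b) \in X].
  move=> b; rewrite in_setD => /andP[bG bR].
  have [bI hCb /setIP[rI rC] brep] := R_char bR.
  have rG : rep (tw b) \in Gd.
    apply: contraNT brep => rG; apply/eqP; exact: (Cond_uniq hC bI rI bG rG rC).
  split => //; first by rewrite eq_sym.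
  rewrite in_setI rG XE_E in_setD rI andbT /=.
  apply/negP => /R_char[_ _ _]; by rewrite (tw_eq rC) eqxx.
have inj : {in R :\: Gd &, injective (fun b => rep (tw b))}.
  move=> b b' hb hb' /= eqr.
  have [bI bG rb _ _] := f1 b hb.
  have [b'I b'G rb' _ _] := f1 b' hb'.
  have etw : tw b = tw b' by rewrite -(tw_eq rb) -(tw_eq rb') eqr.
  apply: (Cond_uniq hC bI b'I bG b'G); rewrite etw; exact: tw_refl.
have cRb : #|Rb| = #|R :\: Gd| by apply: card_in_imset.
have RbX : Rb \subset X.
  by apply/subsetP => r /imsetP[b hb ->]; have [] := f1 b hb.
have cX : #|X| = #|A| + #|Rb|.
  by rewrite -(cardsID Rb X) (setIidPr RbX) addnC.
have cGd : #|Gd| = #|Gd :&: R| + #|X|.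
  have eX : Gd :\: R = X.
    apply/setP => x; rewrite !in_setD in_setI XE_E in_setD; case: (boolP (x \in Gd)) => xG; rewrite ?andbF //.
    by rewrite (subsetP GI x xG) !andbT.
  by rewrite -(cardsID R Gd) eX.
have cR : #|R| = #|Gd :&: R| + #|R :\: Gd| by rewrite -(cardsID Gd R) setIC.
have hA : rho_ok e E rep A.
  apply/andP; split.
    by apply: subset_trans (subsetDl _ _) (subsetIr _ _).
  apply/forallP => i; apply/forallP => j; apply/implyP => /and4P[iX jX eij /forallP hall].
  have ij : i != j by apply: contraTneq eij => ->; rewrite eirr.
  case: (boolP (i \in A)) => iA.
    by apply/existsP; exists i; rewrite iA !dist2E eqxx (negbTE ij) eij.
  case: (boolP (j \in A)) => jA.
    have ji : j != i by rewrite eq_sym.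
    apply/existsP; exists j; rewrite jA !dist2E eqxx (negbTE ji) esym eij.
    by [].
  have pick : forall i, i \in XE e E rep -> i \notin A ->
      exists x, [/\ x \in I, x \notin Gd & x \in tw i].
    move=> i0 i0X i0A.
    case: (boolP (i0 \in Rb)) => [/imsetP[b hb ->]|i0Rb].
      have [bI bG rb _ _] := f1 b hb.
      by exists b; split => //; apply: tw_sym.
    exists i0; split; [exact: (subsetP XE_I) | | exact: tw_refl].
    apply: contraNN i0A => i0G; by rewrite in_setD i0Rb in_setI i0G i0X.
  have [x [xI xG xi]] := pick i iX iA.
  have [y [yI yG yj]] := pick j jX jA.
  have xy : x != y.
    apply/eqP => exy; subst y; case/eqP: ij; apply: XE_twin iX jX _.
    by rewrite -(tw_eq xi) (tw_eq yj) tw_refl.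
  have exy := tw_adj2 esym xi yj eij xy.
  have [k [kx ky hadm hk]] := hC x y xI yI xG yG exy.
  have ki : k != i.
    apply/eqP => ki; subst k.
    have ix : x != i by rewrite eq_sym.
    move: hk; rewrite (tw_d2_adj esym eirr eij yj ky).
    by rewrite dist2E (negbTE kx) (tw_adj xi ix).
  have kj : k != j.
    apply/eqP => kj; subst k.
    have jy : y != j by rewrite eq_sym.
    have eji : e j i by rewrite esym.
    move: hk; rewrite (tw_d2_adj esym eirr eji xi kx).
    by rewrite dist2E (negbTE ky) (tw_adj yj jy).
  have hk' : dist2 e k i != dist2 e k j.
    by rewrite (tw_d2 esym xi ki kx) (tw_d2 esym yj kj ky).
  have kVE : k \in VE e E.
    apply: contraTT hk' => kVE; rewrite negbK.
    apply: (implyP (hall k)); rewrite in_setU negb_or kVE /=.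
    by rewrite in_set2 negb_or ki kj.
  move: (kVE); rewrite /VE inE => /andP[kTG kEL].
  have kG : k \in Gd by move: hadm; rewrite /adm inE kEL.
  have kA : k \in A.
    rewrite in_setD in_setI kG XE_E in_setD (subsetP GI k kG) andbT /=.
    apply/andP; split; last by apply: contraNN kTG; exact: R_TG.
    apply: contraNN kTG => /imsetP[b hb ->].
    have [_ _ rb _ _] := f1 b hb.
    have [_ hCb _ _] := R_char (elimT (setDP) hb).1.
    by apply: TC_TG; rewrite (tw_eq rb).
  by apply/existsP; exists k; rewrite kA.
have := rho'_le hA; lia.
Qed.

End Comb.

Lemma sum_ind n (A : {set 'I_n}) : \sum_(i < n) (i \in A : nat) = #|A|.
Proof.
rewrite -sum1_card [RHS]big_mkcond /=; apply: eq_bigr => i _; by case: (i \in A).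
Qed.

Theorem theorem7 (n : nat) (e : rel 'I_n) (V : 'I_n -> finType)
  (E : forall i, rel (V i)) (rep : {set 'I_n} -> 'I_n) :
  2 <= n ->
  simple_graph e ->
  connected_graph e ->
  (forall i, simple_graph (E i)) ->
  (forall i, 0 < #|V i|) ->
  rep_ok e E rep ->
  adim_l (lex_adj e E) =
    \sum_(i < n) adim_l (E i)
    + \sum_(C in twin_classes e | Iset E :&: C != set0) (#|Iset E :&: C| - 1)
    + rho' e E rep.
Proof.
move=> _ [esym eirr] _ hE hV hrep.
have Esym i : symmetric (@E i) by case: (hE i).
have Eirr i : irreflexive (@E i) by case: (hE i).
have ELI : EL E \subset Iset E.
  apply/subsetP => i; rewrite !inE => h.
  have /card_gt0P[x0 _] := hV i; exact: edgeless_classG x0 h.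
have ePirr : irreflexive (lex_adj e E).
  by case=> i v; rewrite /lex_adj /= eirr eqxx tagged_asE Eirr.
rewrite -(R_card hrep).
apply/eqP; rewrite eqn_leq; apply/andP; split.
-
  have XEok : rho_ok e E rep (XE e E rep).
    apply/andP; split => //; apply/forallP => i; apply/forallP => j; apply/implyP.
    case/and4P => iX _ eij _; apply/existsP; exists i; rewrite iX.
    have ij : i != j by apply: contraTneq eij => ->; rewrite eirr.
    by rewrite !dist2E eqxx (negbTE ij) eij.
  have [A hA cA] : exists2 A, rho_ok e E rep A & rho' e E rep = #|A|.
    by have [A hA h] := bigmin_att (f := fun A => #|A|) XEok erefl; exists A.
  set Gd := Rset e E rep :|: A.
  have hC := upper_cond esym ELI hA.
  have hX1 i : exists B : {set V i}, [&& ladj_gen (@E i) B, #|B| == adim_l (@E i)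
                          & in_classG (@E i) || good (@E i) B].
    have [B [h1 h2 h3]] := E1 (Eirr i); exists B; rewrite h1 h2 eqxx /=.
    by case: (in_classG (@E i)) h3 => //= ->.
  have hX2 i : exists B : {set V i}, [&& ladj_gen (@E i) B, #|B| == (adim_l (@E i)).+1 & good (@E i) B].
    have /card_gt0P[x0 _] := hV i.
    have [B [h1 h2 h3]] := E2 (Esym i) (Eirr i) x0; exists B; by rewrite h1 h2 h3 eqxx.
  pose F i := if i \in Gd then xchoose (hX2 i) else xchoose (hX1 i).
  have lagF i : ladj_gen (@E i) (F i).
    rewrite /F; case: ifP => _.
      by case/and3P: (xchooseP (hX2 i)).
    by case/and3P: (xchooseP (hX1 i)).
  have cardF i : #|F i| = adim_l (@E i) + (i \in Gd).
    rewrite /F; case: ifP => _.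
      by case/and3P: (xchooseP (hX2 i)) => _ /eqP -> _; rewrite addn1.
    by case/and3P: (xchooseP (hX1 i)) => _ /eqP -> _; rewrite addn0.
  have goodF i : (i \in Gd) || (i \notin Iset E) -> good (@E i) (F i).
    rewrite /F; case: ifP => _ /=.
      by case/and3P: (xchooseP (hX2 i)).
    move=> h; case/and3P: (xchooseP (hX1 i)) => _ _ /orP[hc|//].
    by rewrite inE hc in h.
  have hok : edge_ok e E F.
    move=> i j eij.
    case: (boolP (good (@E i) (F i))) => //= gi.
    case: (boolP (good (@E j) (F j))) => //= gj.
    have iG : i \notin Gd by apply: contraNN gi => h; apply: goodF; rewrite h.
    have jG : j \notin Gd by apply: contraNN gj => h; apply: goodF; rewrite h.
    have iI : i \in Iset E by apply: contraNT gi => h; apply: goodF; rewrite h orbT.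
    have jI : j \in Iset E by apply: contraNT gj => h; apply: goodF; rewrite h orbT.
    have [k [ki kj hadm hk]] := hC i j iI jI iG jG eij.
    apply/existsP; exists k; rewrite ki kj hk andbT /=.
    have /card_gt0P[x0 _] := hV k.
    move: hadm; rewrite /adm => /orP[kEL|kG].
      move: kEL; rewrite inE negb_forall => /existsP[x]; rewrite negb_forall => /existsP[y].
      rewrite negbK => Exy; exact: lag_nonempty Exy (lagF k).
    by apply: (good_nonempty x0); apply: goodF; rewrite kG.
  have := lag_card (L2 esym eirr Esym (F := F) lagF hok).
  rewrite card_sigS.
  have -> : \sum_i #|F i| = \sum_(i < n) adim_l (@E i) + #|Gd|.
    by rewrite -sum_ind -big_split; apply: eq_bigr => i _; rewrite cardF.
  have : #|Gd| <= #|Rset e E rep| + #|A| by rewrite cardsU; lia.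
  lia.
-
  have [S hS cS] := basis_ex ePirr.
  pose F := slice S.
  have hS' : ladj_gen (lex_adj e E) (sigS F) by rewrite sigS_slice.
  have [hlag hedge] := L1 esym eirr Esym Eirr hS'.
  set Gd := [set i in Iset E | good (@E i) (F i)].
  have GI : Gd \subset Iset E by apply/subsetP => i; rewrite inE => /andP[].
  have hC : Cond e E Gd.
    move=> i j iI jI iG jG eij.
    case/or3P: (hedge i j eij) => [gi|gj|/existsP[k /and4P[ki kj ne hk]]].
    - by move: iG; rewrite inE iI gi.
    - by move: jG; rewrite inE jI gj.
    exists k; split => //; rewrite /adm; case: (boolP (k \in EL E)) => //= kEL.
    rewrite inE (subsetP ELI k kEL) /=; apply: edgeless_good => //.
    by move: kEL; rewrite inE.
  have := lower_comb esym eirr hrep ELI GI hC.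
  have : \sum_(i < n) adim_l (@E i) + #|Gd| <= adim_l (lex_adj e E).
    rewrite -cS -(sigS_slice S) card_sigS -sum_ind -big_split /=.
    apply: leq_sum => i _; case: (boolP (i \in Gd)) => iG.
      rewrite addn1; move: (iG); rewrite inE => /andP[iI gi].
      apply: good_lower; [exact: hlag | by move: iI; rewrite inE | exact: gi].
    by rewrite addn0; apply: lag_card; exact: hlag.
  lia.
Qed.
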